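(* Let $X$ be a set. For every directed pseudo-metric $d$ on $\mathcal P(X)$, $\alpha_T(\gamma_T(d))$ is the greatest directed pseudo-metric $d'$ on $\mathcal P(X)$ such that $d'\le d$ and $d'$ is join-preserving in its first argument.
   Context: $r\oplus s=\min\{r+s,1\}$, $r\ominus s=\max\{0,r-s\}$. A directed pseudo-metric on $Y$ is $d\colon Y\times Y\to[0,1]$ with $d(y,y)=0$ and $d(x,z)\le d(x,y)\oplus d(y,z)$. $d'$ on $\mathcal P(X)$ is join-preserving in its first argument if $d'(\bigcup_iX_i,Y)=\bigvee_id'(X_i,Y)$ for all families (empty join $=0$). For $f\colon X\to[0,1]$, $\tilde f(Y)=\bigvee_{x\in Y}f(x)$. $\alpha_T(\mathcal F)(X_1,X_2)=\bigvee_{f\in\mathcal F}(\tilde f(X_1)\ominus\tilde f(X_2))$ for $\mathcal F\subseteq[0,1]^X$; $\gamma_T(d)=\{f\in[0,1]^X\mid\forall X_1,X_2\subseteq X\colon\tilde f(X_1)\ominus\tilde f(X_2)\le d(X_1,X_2)\}$. *)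

(* Defs.v *)
From HB Require Import structures.
From mathcomp Require Import all_boot all_order all_algebra.
From mathcomp Require Import all_classical all_reals.
Set Implicit Arguments. Unset Strict Implicit. Unset Printing Implicit Defensive.
Import Order.TTheory GRing.Theory Num.Theory.
Local Open Scope classical_set_scope.
Local Open Scope ring_scope.

Definition oplus {R : realType} (r s : R) : R := Num.min (r + s) 1.
Definition ominus {R : realType} (r s : R) : R := Num.max 0 (r - s).

(* Join in the complete lattice [0,1] of a set of values in [0,1]:
   the supremum, with empty join = 0 (bottom). *)
Definition join01 {R : realType} (S : set R) : R := sup (S `|` [set 0]).

Definition in01 {R : realType} (r : R) : Prop := 0 <= r /\ r <= 1.

Definition directed_pseudometric {R : realType} {Y : Type} (d : Y -> Y -> R) : Prop :=
  (forall x y, in01 (d x y)) /\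
  (forall y, d y y = 0) /\
  (forall x y z, d x z <= oplus (d x y) (d y z)).

Definition join_preserving_first {R : realType} {X : Type}
  (d : set X -> set X -> R) : Prop :=
  forall (I : Type) (Xs : I -> set X) (Y : set X),
    d (\bigcup_(i in [set: I]) Xs i) Y = join01 [set d (Xs i) Y | i in [set: I]].

Definition lift {R : realType} {X : Type} (f : X -> R) (Y : set X) : R :=
  join01 (f @` Y).

Definition alphaT {R : realType} {X : Type} (F : set (X -> R)) : set X -> set X -> R :=
  fun X1 X2 => join01 [set ominus (lift f X1) (lift f X2) | f in F].

Definition gammaT {R : realType} {X : Type} (d : set X -> set X -> R) : set (X -> R) :=
  [set f | (forall x, in01 (f x)) /\
           forall X1 X2 : set X, ominus (lift f X1) (lift f X2) <= d X1 X2].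

(* Main.v *)
Require Import Defs.
From mathcomp Require Import all_boot all_order all_algebra.
From mathcomp Require Import all_classical all_reals.
From mathcomp Require Import lra.
Import Order.TTheory GRing.Theory Num.Theory.
Local Open Scope classical_set_scope.
Local Open Scope ring_scope.
Local Notation lift := Defs.lift.

Section Aux.
Variable R : realType.
Implicit Types (S : set R) (a b c p q P Q : R).

Lemma join01_ub S s : (forall t, S t -> in01 t) -> S s -> s <= join01 S.
Proof.
move=> hM Ss; apply: sup_upper_bound; last by left.
split; first by exists 0; right.
by exists 1 => t [/hM [_ ->]|->].
Qed.

Lemma join01_le S b : 0 <= b -> (forall t, S t -> t <= b) -> join01 S <= b.
Proof.
move=> b0 hb; apply: ge_sup; first by exists 0; right.
by move=> t [/hb|->].
Qed.

Lemma join01_in01 S : (forall t, S t -> in01 t) -> in01 (join01 S).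
Proof.
move=> h; split; last by apply: join01_le => // t /h [].
apply: sup_upper_bound; last by right.
split; first by exists 0; right.
by exists 1 => t [/h [_ ->]|->].
Qed.

Lemma om01 a b : in01 a -> in01 b -> in01 (ominus a b).
Proof.
move=> [? ?] [? ?]; rewrite /ominus /in01; split.
  by rewrite le_max lexx.
by rewrite ge_max; apply/andP; split; lra.
Qed.

Lemma om_ge0 a b : 0 <= ominus a b.
Proof. by rewrite /ominus le_max lexx. Qed.

Lemma om_le a b P : 0 <= P -> a <= P + b -> ominus a b <= P.
Proof. move=> ? ?; rewrite /ominus ge_max; apply/andP; split; lra. Qed.

Lemma le_om a b : a <= ominus a b + b.
Proof.
by rewrite -lerBlDr /ominus le_max lexx orbT.
Qed.

Lemma om_mono a a' b : a <= a' -> ominus a b <= ominus a' b.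
Proof.
move=> h; rewrite /ominus ge_max le_max lexx /= le_max; apply/orP; right; lra.
Qed.

Lemma om_r0 a : 0 <= a -> ominus a 0 = a.
Proof. by move=> h; apply/eqP; rewrite eq_le /ominus ge_max h subr0 lexx le_max lexx orbT. Qed.

Lemma tri_aux a b c P Q : in01 a -> in01 b -> in01 c ->
  ominus a b <= P -> ominus b c <= Q -> ominus a c <= oplus P Q.
Proof.
move=> [? ?] [? ?] [? ?]; rewrite /ominus /oplus !ge_max !le_min.
move=> /andP[? ?] /andP[? ?].
apply/andP; split; apply/andP; split; lra.
Qed.

Lemma tri_aux2 a b p : a <= oplus p b -> 0 <= p -> ominus a b <= p.
Proof.
rewrite /oplus le_min => /andP[? ?] ?; apply: om_le => //; lra.
Qed.

Lemma oplus_ge0 p q : 0 <= p -> 0 <= q -> 0 <= oplus p q.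
Proof. by move=> ? ?; rewrite /oplus le_min; apply/andP; split; lra. Qed.

End Aux.

Theorem mainTheorem16 (R : realType) (X : Type) (d : set X -> set X -> R) :
  directed_pseudometric d ->
  let d0 := alphaT (gammaT d) in
  [/\ directed_pseudometric d0,
      (forall X1 X2, d0 X1 X2 <= d X1 X2),
      join_preserving_first d0 &
      (forall d' : set X -> set X -> R,
         directed_pseudometric d' ->
         (forall X1 X2, d' X1 X2 <= d X1 X2) ->
         join_preserving_first d' ->
         forall X1 X2, d' X1 X2 <= d0 X1 X2)].
Proof.
move=> [d01 [ddiag dtri]] d0.
have lift01 : forall f : X -> R, (forall x, in01 (f x)) -> forall A, in01 (lift f A).
  by move=> f hf A; apply: join01_in01 => t [x _ <-].
have liftG : forall f : X -> R, gammaT d f -> forall A, in01 (lift f A).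
  by move=> f [hf _]; apply: lift01.
have elt01 : forall (A B : set X) (t : R), [set ominus (lift f A) (lift f B) | f in gammaT d] t -> in01 t.
  by move=> A B t [f Gf <-]; apply: om01; apply: liftG.
have d001 : forall A B : set X, in01 (d0 A B).
  by move=> A B; apply: join01_in01; apply: elt01.
have d0ub : forall (f : X -> R) (A B : set X), gammaT d f -> ominus (lift f A) (lift f B) <= d0 A B.
  by move=> f A B Gf; apply: join01_ub; [apply: elt01| exists f].
have liftub : forall f : X -> R, (forall x, in01 (f x)) -> forall (A : set X) x, A x -> f x <= lift f A.
  by move=> f hf A x Ax; apply: join01_ub; [move=> t [y _ <-]; apply: hf | exists x].
split.
- split; first exact: d001.
  split.
    move=> A; apply/eqP; rewrite eq_le; apply/andP; split; last by case: (d001 A A).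
    by apply: join01_le => // t [f _ <-]; rewrite /ominus subrr maxxx.
  move=> A B C; apply: join01_le.
    by apply: oplus_ge0; [case: (d001 A B) | case: (d001 B C)].
  move=> t [f Gf <-]; apply: (@tri_aux _ _ (lift f B)); try exact: liftG; exact: d0ub.
- move=> A B; apply: join01_le; first by case: (d01 A B).
  by move=> t [f [_ hf] <-]; apply: hf.
- move=> I Xs Y; set U := \bigcup_(i in _) Xs i.
  set J := join01 _.
  have J01 : in01 J by apply: join01_in01 => t [i _ <-]; apply: d001.
  have d0J : forall i, d0 (Xs i) Y <= J.
    by move=> i; apply: join01_ub; [move=> t [j _ <-]; apply: d001 | exists i].
  apply/eqP; rewrite eq_le; apply/andP; split.
    apply: join01_le; first by case: J01.
    move=> t [f Gf <-]; apply: om_le; first by case: J01.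
    apply: join01_le.
      by case: J01 => ? _; case: (liftG f Gf Y) => ? _; lra.
    move=> s [x [i _ Xix] <-].
    apply: (le_trans (liftub f (proj1 Gf) _ _ Xix)).
    apply: (le_trans (@le_om _ _ (lift f Y))); rewrite lerD2r.
    exact: (le_trans (d0ub f _ _ Gf) (d0J i)).
  apply: join01_le; first by case: (d001 U Y).
  move=> t [i _ <-]; apply: join01_le; first by case: (d001 U Y).
  move=> s [f Gf <-]; apply: le_trans (d0ub f U Y Gf).
  apply: om_mono; apply: join01_le; first by case: (liftG f Gf U).
  move=> r [x Xix <-]; apply: liftub; first exact: (proj1 Gf).
  by exists i.
- move=> d' [d'01 [d'diag d'tri]] d'd jp X1 Y.
  pose f := fun x => d' [set x] Y.
  have f01 : forall x, in01 (f x) by move=> x; apply: d'01.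
  have liftf : forall A, lift f A = d' A Y.
    move=> A; have := jp {x | A x} (fun i => [set sval i]) Y.
    have -> : \bigcup_(i in [set: {x | A x}]) [set sval i] = A.
      apply/seteqP; split => x.
        by move=> [[y Ay] _ /= ->].
      by move=> Ax; exists (exist _ x Ax).
    move=> ->; rewrite /lift; congr join01.
    apply/seteqP; split => r.
      by move=> [x Ax <-]; exists (exist _ x Ax).
    by move=> [[x Ax] _ <-]; exists x.
  have Gf : gammaT d f.
    split => // A B; rewrite !liftf.
    apply: le_trans (d'd A B); apply: tri_aux2; first exact: d'tri.
    by case: (d'01 A B).
  have := d0ub f X1 Y Gf; rewrite !liftf d'diag om_r0 //.
  by case: (d'01 X1 Y).
Qed.
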